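(* Let $n\ge 2$ and $q=p_n$. Then for $X=F_n(q)$ the matrix $X^TX$ is invertible and the log-prime estimator satisfies $\ln\hat q=(X^TX)^{-1}X^T\ln z_n=\ln p_n$.
   Context: $z_n=(1,\dots,n)^T$; $p_n$ is the vector of all primes $\le n$ in increasing order; logarithms of vectors are entry-wise. For $1\le i\le n$, $e_{\bar i|n}\in\mathbb{R}^n$ has $k$-th entry $1$ if $i\mid k$, else $0$. For $2\le i\le n$, $f_{i|n}=\sum_{t=1}^{\lfloor \log_i n\rfloor} e_{\overline{i^t}|n}$. For $q=(q_1,\dots,q_m)^T$ with distinct entries in $\{2,\dots,n\}$, $F_n(q)=[f_{q_1|n}\ \cdots\ f_{q_m|n}]\in\mathbb{R}^{n\times m}$. *)

(* Defs.v *)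
From Stdlib Require Import Reals.
From mathcomp Require Import all_boot.
Unset Printing Implicit Defensive.

(* Real vectors/matrices indexed by ordinals: row k : 'I_n stands for index k+1. *)
Definition rsum {n : nat} (F : 'I_n -> R) : R := \big[Rplus/R0]_(i < n) F i.

Definition mmul {m p r : nat} (A : 'I_m -> 'I_p -> R) (B : 'I_p -> 'I_r -> R)
  : 'I_m -> 'I_r -> R := fun i j => rsum (fun k => Rmult (A i k) (B k j)).

Definition mvec {m p : nat} (A : 'I_m -> 'I_p -> R) (v : 'I_p -> R) : 'I_m -> R :=
  fun i => rsum (fun k => Rmult (A i k) (v k)).

Definition trm {m p : nat} (A : 'I_m -> 'I_p -> R) : 'I_p -> 'I_m -> R :=
  fun j i => A i j.

Definition idm {m : nat} : 'I_m -> 'I_m -> R :=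
  fun i j => if i == j then R1 else R0.

Definition is_inverse {m : nat} (B A : 'I_m -> 'I_m -> R) : Prop :=
  forall i j, mmul B A i j = idm i j /\ mmul A B i j = idm i j.

(* z_n = (1,...,n)^T, entrywise log *)
Definition ln_z (n : nat) : 'I_n -> R := fun k => ln (INR k.+1).

Definition primes_upto (n : nat) : seq nat := [seq p <- iota 1 n | prime p].

Definition ln_vec (q : seq nat) : 'I_(size q) -> R := fun j => ln (INR (nth 0 q j)).

Definition ebar (i n : nat) : 'I_n -> R := fun k => if i %| k.+1 then R1 else R0.

(* f_{i|n} = sum_{t=1}^{floor(log_i n)} e_{\bar{i^t}|n};
   trunc_log i n = largest t with i^t <= n = floor(log_i n) for i >= 2, n >= 1. *)
Definition fvec (i n : nat) : 'I_n -> R :=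
  fun k => \big[Rplus/R0]_(1 <= t < (trunc_log i n).+1) ebar (i ^ t) n k.

Definition Fmat (n : nat) (q : seq nat) : 'I_n -> 'I_(size q) -> R :=
  fun k j => fvec (nth 0 q j) n k.

(* Main.v *)
From Stdlib Require Import Reals.
From mathcomp Require Import all_boot all_algebra.
From mathcomp Require Import Rstruct.
Require Import Defs.
Import GRing.Theory Num.Theory.

Section Aux.
Local Open Scope ring_scope.

Lemma ln_natM (a b : nat) : (0 < a)%N -> (0 < b)%N ->
  ln ((a * b)%N%:R) = ln a%:R + ln b%:R.
Proof.
move=> a0 b0; rewrite natrM; apply: ln_mult; rewrite -INRE; apply: lt_0_INR;
  apply/ltP; done.
Qed.

Lemma ln_natX (p e : nat) : (0 < p)%N -> ln ((p ^ e)%N%:R) = e%:R * ln p%:R.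
Proof.
move=> p0; elim: e => [|e IH]; first by rewrite expn0 mul0r; exact: ln_1.
rewrite expnS ln_natM ?expn_gt0 ?p0 // IH -addn1 natrD mulrDl mul1r addrC.
done.
Qed.

Lemma ln_nat_prod (m : nat) : (0 < m)%N ->
  ln m%:R = \sum_(0 <= p < m.+1) (logn p m)%:R * ln p%:R.
Proof.
move=> m0; rewrite -{1}(partnT m0) /partn.
rewrite big_mkcond /=.
pose K (x : nat) (y : R) := (0 < x)%N /\ ln x%:R = y.
suff: K (\prod_(0 <= i < m.+1) (if i \in predT then i ^ logn i m else 1%N))%N
        (\sum_(0 <= p < m.+1) (logn p m)%:R * ln p%:R) by case.
apply: big_rec2; first by split => //; exact: ln_1.
move=> i x y _ [x0 <-]; rewrite /= ; split.
  case: (posnP (logn i m)) => [->|lp]; first by rewrite expn0 mul1n.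
  rewrite muln_gt0 x0 andbT expn_gt0; apply/orP; left.
  by move: lp; rewrite logn_gt0 mem_primes => /andP[/prime_gt0].
case: (posnP (logn i m)) => [->|lp].
  by rewrite expn0 mul1n mul0r add0r.
have i0 : (0 < i)%N by move: lp; rewrite logn_gt0 mem_primes => /andP[/prime_gt0].
by rewrite ln_natM ?expn_gt0 ?i0 // ln_natX.
Qed.


Lemma sum_ind (T L : nat) :
  \big[Rplus/R0]_(1 <= t < T.+1) (if (t <= L)%N then R1 else R0) = (minn T L)%:R.
Proof.
elim: T => [|T IH]; first by rewrite big_geq // min0n.
rewrite big_nat_recr //= IH.
case: (leqP T.+1 L) => h.
  rewrite (minn_idPl (ltnW h)) -addn1 natrD; reflexivity.
have h2 : (L <= T)%N by []. rewrite (minn_idPr h2); exact: Rplus_0_r.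
Qed.

Lemma fvecE (p n : nat) (k : 'I_n) : prime p ->
  fvec p n k = (logn p k.+1)%:R.
Proof.
move=> pp; rewrite /fvec /ebar.
have kp : (0 < k.+1)%N by [].
under eq_big_nat => t /andP[t1 _] do rewrite pfactor_dvdn //.
rewrite sum_ind; congr (_%:R); apply/minn_idPr.
apply: trunc_log_max; first exact: prime_gt1.
apply: leq_trans (dvdn_leq kp (pfactor_dvdnn p k.+1)) _.
exact: ltn_ord.
Qed.


Lemma ln_nat_q (n m : nat) : (0 < m)%N -> (m <= n)%N ->
  ln m%:R = \sum_(j < size (primes_upto n))
     (logn (nth 0%N (primes_upto n) j) m)%:R * ln (nth 0%N (primes_upto n) j)%:R.
Proof.
move=> m0 mn; rewrite ln_nat_prod //.
pose g (p : nat) : R := (logn p m)%:R * ln p%:R.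
have gnp : forall p, ~~ prime p -> g p = 0.
  move=> p np; rewrite /g; suff -> : logn p m = 0%N by rewrite mul0r.
  by apply/eqP; rewrite -leqn0 leqNgt logn_gt0 mem_primes (negbTE np).
rewrite -(big_mkord xpredT (fun j => g (nth 0%N (primes_upto n) j))).
rewrite -(big_nth 0%N xpredT g) /primes_upto big_filter.
transitivity (\sum_(0 <= p < n.+1) g p).
  rewrite [RHS](big_cat_nat _ (n:=m.+1)) //=.
  rewrite [X in _ = _ + X]big1_seq ?addr0 //.
  move=> i /andP[_]; rewrite mem_index_iota => /andP[hi _].
  apply/eqP; rewrite mulf_eq0; apply/orP; left; rewrite pnatr_eq0 -leqn0 leqNgt.
  rewrite logn_gt0 mem_primes; apply/negP => /and3P[_ _ /(dvdn_leq m0)].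
  by rewrite leqNgt hi.
rewrite big_ltn //= [RHS]big_mkcond /=.
have -> : g 0%N = 0 by apply: gnp.
rewrite add0r /index_iota subSS subn0; apply: eq_bigr => i _.
by case: ifP => // /negbT /gnp.
Qed.


Definition M {m p : nat} (A : 'I_m -> 'I_p -> R) : 'M[R]_(m, p) := \matrix_(i, j) A i j.
Definition C {m : nat} (v : 'I_m -> R) : 'cV[R]_m := \col_i v i.

Lemma M_mmul {m p r} (A : 'I_m -> 'I_p -> R) (B : 'I_p -> 'I_r -> R) :
  M (mmul A B) = M A *m M B.
Proof. apply/matrixP => i j; rewrite !mxE; apply: eq_bigr => k _; rewrite !mxE; done. Qed.

Lemma M_trm {m p} (A : 'I_m -> 'I_p -> R) : M (trm A) = (M A)^T.
Proof. by apply/matrixP => i j; rewrite !mxE. Qed.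

Lemma C_mvec {m p} (A : 'I_m -> 'I_p -> R) v : C (mvec A v) = M A *m C v.
Proof. apply/matrixP => i j; rewrite !mxE; apply: eq_bigr => k _; rewrite !mxE; done. Qed.

Lemma M_idm {m} : M (@idm m) = 1%:M.
Proof. by apply/matrixP => i j; rewrite !mxE /idm; case: (i == j). Qed.

Lemma q_facts n j : let p := nth 0%N (primes_upto n) j in
  (j < size (primes_upto n))%N -> prime p /\ (0 < p)%N /\ (p <= n)%N.
Proof.
move=> p hj; have : p \in primes_upto n by exact: mem_nth.
rewrite mem_filter mem_iota => /andP[pp /andP[h1 h2]].
by split=> //; split=> //; rewrite -ltnS -(addn1 n) addnC.
Qed.

End Aux.

Open Scope ring_scope.

Theorem theorem3p2 (n : nat) (hn : (2 <= n)%N) :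
  let q := primes_upto n in
  let X := Fmat n q in
  let G := mmul (trm X) X in
  (exists B, is_inverse B G) /\
  (forall B, is_inverse B G ->
     forall j, mvec B (mvec (trm X) (ln_z n)) j = ln_vec q j).
Proof.
move=> q X G.
pose m := size q.
have qlt : forall j : 'I_m, ((nth 0%N q j).-1 < n)%N.
  by move=> j; have [_ [p0 pn]] := q_facts n j (ltn_ord j); rewrite prednK.
pose qi (j : 'I_m) : 'I_n := Ordinal (qlt j).
have Xq : forall j j' : 'I_m, X (qi j) j' = (j' == j)%:R.
  move=> j j'.
  have [pp [p0 pn]] := q_facts n j (ltn_ord j).
  have [pp' _] := q_facts n j' (ltn_ord j').
  rewrite /X /Fmat fvecE // /qi /= prednK // logn_prime //.
  rewrite (nth_uniq 0%N (ltn_ord j') (ltn_ord j)) //.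
  by rewrite filter_uniq // iota_uniq.
pose Xm := M X.
have MG : M G = Xm^T *m Xm by rewrite /G M_mmul M_trm.
have kerG : forall u : 'rV_m, u *m M G = 0 -> u = 0.
  move=> u uG.
  have [w wE] : {w | w = u *m Xm^T} by exists (u *m Xm^T).
  have ww : w *m w^T = 0.
    by rewrite wE trmx_mul trmxK mulmxA -(mulmxA u) -MG uG mul0mx.
  have w0 : forall k, w 0 k = 0.
    move=> k; have := congr1 (fun A : 'M[R]_1 => A 0 0) ww; rewrite !mxE => hs.
    have h0 : forall i : 'I_n, true -> 0 <= w 0 i * w^T i 0.
      by move=> i _; rewrite mxE -expr2 sqr_ge0.
    have := psumr_eq0P h0 hs (i:=k) isT.
    by rewrite mxE => /eqP; rewrite mulf_eq0 orbb => /eqP.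
  apply/rowP => j; rewrite mxE.
  have := w0 (qi j); rewrite wE !mxE (bigD1 j) //= big1 ?addr0.
    by rewrite !mxE Xq eqxx mulr1.
  by move=> i /negbTE ij; rewrite !mxE Xq ij mulr0.
have unitG : M G \in unitmx.
  rewrite -row_free_unit -kermx_eq0; apply/eqP/row_matrixP => i; rewrite row0.
  apply: kerG; apply/sub_kermxP; exact: row_sub.
split.
  exists (fun i j => invmx (M G) i j) => i j.
  have MB : M (fun i j => invmx (M G) i j) = invmx (M G).
    by apply/matrixP => ? ?; rewrite mxE.
  split.
    have -> : mmul (fun i j => invmx (M G) i j) G i j
      = M (mmul (fun i j => invmx (M G) i j) G) i j by rewrite mxE.
    by rewrite M_mmul MB mulVmx // -M_idm mxE.
  have -> : mmul G (fun i j => invmx (M G) i j) i j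
    = M (mmul G (fun i j => invmx (M G) i j)) i j by rewrite mxE.
  by rewrite M_mmul MB mulmxV // -M_idm mxE.
move=> B hB j.
have BG : M B *m M G = 1%:M.
  apply/matrixP => i k; rewrite -M_mmul -M_idm !mxE; exact: (hB i k).1.
have lz : C (ln_z n) = Xm *m C (ln_vec q).
  apply/matrixP => k z; rewrite !mxE /ln_z INRE (ln_nat_q n) //.
  apply: eq_bigr => j' _; rewrite !mxE /X /Fmat /ln_vec INRE.
  have [pp' _] := q_facts n j' (ltn_ord j').
  by rewrite fvecE.
transitivity (C (mvec B (mvec (trm X) (ln_z n))) j 0); first by rewrite mxE.
rewrite !C_mvec lz M_trm !mulmxA -(mulmxA (M B)) -MG BG mul1mx mxE.
done.
Qed.
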